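(* For any $n\in\mathbb{N}$ with $n\geq2$, the free monoid of rank $2^{n-1}$ embeds into $\mathrm{lps}_n$.
   Context: Let $\mathcal{A}_n=\{1<2<\cdots<n\}$. An lPS tableau is a finite (possibly empty) sequence of nonempty bottom-justified columns of boxes filled with positive integers, such that the entries of each column are strictly decreasing from top to bottom and the bottom entries of the columns form a weakly increasing sequence from left to right. Right insertion of a symbol $a$ into an lPS tableau $B$: if $a$ is greater than or equal to every entry of the bottom row, append a new column consisting of $a$ at the right end; otherwise, let $z$ be the leftmost bottom-row entry with $z>a$ and put $a$ in a new box at the bottom of the column of $z$ (the previous entries of that column move up one box). For $w=w_1\cdots w_k$, $\mathfrak{R}_\ell(w)$ is obtained by starting with the empty tableau and right-inserting $w_1,\dots,w_k$ in order. The monoid $\mathrm{lps}_n$ is the quotient of the free monoid $\mathcal{A}_n^*$ by the congruence $u\equiv v\iff\mathfrak{R}_\ell(u)=\mathfrak{R}_\ell(v)$. *)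

(* Defs.v *)
From mathcomp Require Import all_boot.
Set Implicit Arguments. Unset Strict Implicit. Unset Printing Implicit Defensive.

(* Alphabet A_n = {1 < ... < n} is represented by 'I_n (symbol i+1 as i : 'I_n);
   the order is preserved, so insertion behaves identically. *)

(* An lPS tableau: a list of columns from left to right; each column is a
   list of its entries read from BOTTOM to TOP (so the head is the bottom entry). *)
Definition lps_tableau := seq (seq nat).

Fixpoint rinsert (a : nat) (B : lps_tableau) : lps_tableau :=
  match B with
  | [::] => [:: [:: a]]
  | c :: B' => if a < head a c then (a :: c) :: B' else c :: rinsert a B'
  end.

Definition Rl (n : nat) (w : seq 'I_n) : lps_tableau :=
  foldl (fun B a => rinsert a B) [::] (map (@nat_of_ord n) w).

Definition lps_equiv (n : nat) (u v : seq 'I_n) : Prop := Rl u = Rl v.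

(* An embedding of the free monoid on 'I_k (words seq 'I_k) into lps_n, given
   via a choice of representative words: f is a monoid homomorphism into the
   quotient A_n^*/≡ and is injective. *)
Definition free_monoid_embeds_lps (k n : nat) : Prop :=
  exists f : seq 'I_k -> seq 'I_n,
    [/\ lps_equiv (f [::]) [::],
        (forall u v, lps_equiv (f (u ++ v)) (f u ++ f v))
      & (forall u v, lps_equiv (f u) (f v) -> u = v)].

(* Main.v *)
Require Import Defs.
From mathcomp Require Import all_boot.

Definition colb (b : bool) : seq nat := if b then [:: 0; 1] else [:: 0].
Definition gnat (s : seq bool) : seq nat :=
  flatten (map (fun b : bool => if b then [:: 1; 0] else [:: 0]) s).

Lemma rinsert_end0 (B : lps_tableau) :
  all (fun c => head 1 c == 0) B -> rinsert 0 B = rcons B [:: 0].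
Proof.
elim: B => [|c B IH] //= /andP[/eqP h hB].
have -> : head 0 c = 0 by case: c h => //.
by rewrite IH.
Qed.

Lemma rinsert_end1 (B : lps_tableau) :
  all (fun c => head 1 c == 0) B -> rinsert 1 B = rcons B [:: 1].
Proof.
elim: B => [|c B IH] //= /andP[/eqP h hB].
have -> : head 1 c = 0 by [].
by rewrite IH.
Qed.

Lemma rinsert_match (B : lps_tableau) :
  all (fun c => head 1 c == 0) B -> rinsert 0 (rcons B [:: 1]) = rcons B [:: 0; 1].
Proof.
elim: B => [|c B IH] //= /andP[/eqP h hB].
have -> : head 0 c = 0 by case: c h => //.
by rewrite IH.
Qed.

Lemma fold_gnat (s : seq bool) (B : lps_tableau) :
  all (fun c => head 1 c == 0) B ->
  foldl (fun B a => rinsert a B) B (gnat s) = B ++ map colb s.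
Proof.
elim: s B => [|b s IH] B hB /=; first by rewrite cats0.
case: b => /=.
- rewrite rinsert_end1 // rinsert_match // IH.
    by rewrite cat_rcons.
  by rewrite all_rcons hB.
- rewrite rinsert_end0 // IH.
    by rewrite cat_rcons.
  by rewrite all_rcons hB.
Qed.

Lemma nseq_code (i j : nat) (s t : seq bool) :
  nseq i false ++ true :: s = nseq j false ++ true :: t -> i = j /\ s = t.
Proof.
elim: i j => [|i IH] [|j] //=; first by case.
by case=> /IH [-> ->].
Qed.

Definition enc {k} (u : seq 'I_k) : seq bool :=
  flatten (map (fun i : 'I_k => nseq i false ++ [:: true]) u).

Lemma enc_inj k (u v : seq 'I_k) : enc u = enc v -> u = v.
Proof.
elim: u v => [|i u IH] [|j v] //=; rewrite /enc /=.
- by case: j => [[|j] ?].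
- by case: i => [[|i] ?].
rewrite -!catA /= => /nseq_code [h1 h2].
by rewrite (IH v h2); congr (_ :: _); apply: val_inj.
Qed.

Lemma colb_inj : injective colb.
Proof. by case; case. Qed.

Theorem proposition4p1 (n : nat) (hn : 2 <= n) :
  free_monoid_embeds_lps (2 ^ (n - 1)) n.
Proof.
have h0 : 0 < n by apply: leq_trans hn.
pose o0 : 'I_n := Ordinal h0.
pose o1 : 'I_n := Ordinal hn.
pose f := fun u : seq 'I_(2 ^ (n - 1)) =>
  flatten (map (fun b : bool => if b then [:: o1; o0] else [:: o0]) (enc u)).
have hf : forall u, Rl (f u) = map colb (enc u).
  move=> u; rewrite /Rl.
  have -> : map (@nat_of_ord n) (f u) = gnat (enc u).
    rewrite /f /gnat; elim: (enc u) => [|b s IH] //=.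
    by rewrite map_cat IH; case: b.
  by rewrite fold_gnat.
exists f; split.
- by [].
- by move=> u v; rewrite /lps_equiv /f /enc !map_cat !flatten_cat !map_cat flatten_cat.
- move=> u v; rewrite /lps_equiv !hf => /(inj_map colb_inj).
  exact: enc_inj.
Qed.
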